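(* Let $\alpha$ be a unit-speed curve in $\mathbb{R}^3$ with nonvanishing curvature, let $\alpha_T$ be its tangent indicatrix with arc length $s_T$ and Frenet apparatus $\{T_T,N_T,B_T,\kappa_T,\tau_T\}$, and let $\beta$ be an evolute-direction curve of $\alpha_T$ (an $X$-direction curve of $\alpha_T$ with $N_\beta=T_T$). Then there is an antiderivative $\varphi=\int\tau_T\,ds_T$ of $\tau_T$ with respect to $s_T$ such that $$\kappa_\beta=-\kappa_T\sin\varphi,\qquad \tau_\beta=\kappa_T\cos\varphi.$$ Moreover, $$\kappa_T=\sqrt{\kappa_\beta^2+\tau_\beta^2},\qquad \tau_T=\frac{\kappa_\beta^2}{\kappa_\beta^2+\tau_\beta^2}\,\frac{d}{ds_T}\Big(\frac{\tau_\beta}{\kappa_\beta}\Big).$$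
   Context: Let $\alpha:I\subset\mathbb{R}\to\mathbb{R}^3$ be a unit-speed curve with arc length $s$, curvature $\kappa>0$, torsion $\tau$ and Frenet frame $\{T,N,B\}$. The tangent indicatrix of $\alpha$ is the curve $\alpha_T=T$ on the unit sphere. Its arc length is $s_T=\int\kappa\,ds$. Its Frenet apparatus is $\{T_T,N_T,B_T,\kappa_T,\tau_T\}$, with $\frac{dT_T}{ds_T}=\kappa_TN_T$, $\frac{dN_T}{ds_T}=-\kappa_TT_T+\tau_TB_T$ and $\frac{dB_T}{ds_T}=-\tau_TN_T$. Let $x,y,z$ be real functions of $s_T$ with $x^2+y^2+z^2=1$, and set $X=xT_T+yN_T+zB_T$. An integral curve $\beta$ of $X$, meaning $d\beta/ds_T=X$, is an $X$-direction curve of $\alpha_T$. It has unit speed with arc length $s_T$. It is regarded as a Frenet curve with frame $\{T_\beta=X,N_\beta,B_\beta\}$, curvature $\kappa_\beta>0$ and torsion $\tau_\beta$, with derivatives taken with respect to $s_T$. $\beta$ is an evolute-direction curve of $\alpha_T$ if $N_\beta=T_T$. *)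

(* Defs.v *)
From HB Require Import structures.
From mathcomp Require Import all_boot all_order all_algebra.
From mathcomp Require Import all_classical all_reals all_analysis.
Set Implicit Arguments. Unset Strict Implicit. Unset Printing Implicit Defensive.
Import Order.TTheory GRing.Theory Num.Theory.
Import numFieldNormedType.Exports.
Local Open Scope classical_set_scope.
Local Open Scope ring_scope.

Definition dotv {R : realType} (u v : 'rV[R]_3) : R := \sum_(i < 3) u ord0 i * v ord0 i.

Definition crossv {R : realType} (u v : 'rV[R]_3) : 'rV[R]_3 :=
  let c := fun (w : 'rV[R]_3) (k : nat) => w ord0 (inord k) in
  \row_(i < 3) [:: c u 1%N * c v 2%N - c u 2%N * c v 1%N;
                   c u 2%N * c v 0%N - c u 0%N * c v 2%N;
                   c u 0%N * c v 1%N - c u 1%N * c v 0%N]`_i.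

(* [is_frenet I v c T N B k t]: on the set I, the curve c (parametrized by s)
   has positively oriented orthonormal Frenet frame {T,N,B}, curvature k > 0
   and torsion t, all *with respect to an arc length parameter sigma* with
   d sigma / ds = v s. *)
Definition is_frenet {R : realType} (I : set R) (v : R -> R)
  (c T N B : R -> 'rV[R]_3) (k t : R -> R) : Prop :=
  forall s, I s ->
  [/\ (derivable c s 1 /\ derive1 c s = v s *: T s),
      (derivable T s 1 /\ derive1 T s = (v s * k s) *: N s),
      (derivable N s 1 /\ derive1 N s = v s *: (- (k s) *: T s + t s *: B s)),
      (derivable B s 1 /\ derive1 B s = - (v s * t s) *: N s) /\
      [/\ dotv (T s) (T s) = 1, dotv (N s) (N s) = 1, dotv (T s) (N s) = 0
        & B s = crossv (T s) (N s)]
    & 0 < k s].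

(* Main.v *)
Require Import Defs.
From HB Require Import structures.
From mathcomp Require Import all_boot all_order all_algebra.
From mathcomp Require Import all_classical all_reals all_analysis.
From mathcomp Require Import ring lra.
Import Order.TTheory GRing.Theory Num.Theory.
Import numFieldNormedType.Exports.
Local Open Scope classical_set_scope.
Local Open Scope ring_scope.

Section V.
Variable R : realType.
Implicit Types (u v w n : 'rV[R]_3) (a : R).
Notation c u k := (u ord0 (@inord 2 k)).

Lemma dotvE (u v : 'rV[R]_3) : dotv u v = c u 0 * c v 0 + c u 1 * c v 1 + c u 2 * c v 2.
Proof.
rewrite /dotv !big_ord_recl big_ord0 addr0 addrA.
by congr (_ * _ + _ * _ + _ * _); congr (_ _ _); apply/val_inj; rewrite /= inordK.
Qed.

Lemma crossvE (u v : 'rV[R]_3) :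
  [/\ c (crossv u v) 0 = c u 1 * c v 2 - c u 2 * c v 1,
      c (crossv u v) 1 = c u 2 * c v 0 - c u 0 * c v 2 &
      c (crossv u v) 2 = c u 0 * c v 1 - c u 1 * c v 0].
Proof. by rewrite /crossv !mxE !inordK. Qed.

Lemma scalevE (a : R) (u : 'rV[R]_3) k : c (a *: u) k = a * c u k.
Proof. by rewrite mxE. Qed.
Lemma addvE (u v : 'rV[R]_3) k : c (u + v) k = c u k + c v k.
Proof. by rewrite mxE. Qed.
Lemma oppvE (u : 'rV[R]_3) k : c (- u) k = - c u k.
Proof. by rewrite mxE. Qed.

Lemma dotvC u v : dotv u v = dotv v u.
Proof. rewrite !dotvE; ring. Qed.
Lemma dotvZr a u v : dotv u (a *: v) = a * dotv u v.
Proof. rewrite !dotvE !scalevE; ring. Qed.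
Lemma dotvZl a u v : dotv (a *: u) v = a * dotv u v.
Proof. rewrite !dotvE !scalevE; ring. Qed.
Lemma dotvDr u v w : dotv u (v + w) = dotv u v + dotv u w.
Proof. rewrite !dotvE !addvE; ring. Qed.
Lemma dotvDl u v w : dotv (v + w) u = dotv v u + dotv w u.
Proof. rewrite !dotvE !addvE; ring. Qed.
Lemma dotv_crossl u v : dotv u (crossv u v) = 0.
Proof. rewrite !dotvE; have [-> -> ->] := crossvE u v; ring. Qed.
Lemma dotv_crossr u v : dotv v (crossv u v) = 0.
Proof. rewrite !dotvE; have [-> -> ->] := crossvE u v; ring. Qed.
Lemma dotv_triple n u v : dotv n (crossv u v) = dotv u (crossv v n).
Proof. rewrite !dotvE; have [-> -> ->] := crossvE u v; have [-> -> ->] := crossvE v n; ring. Qed.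
Lemma dotv_lagrange u v : dotv (crossv u v) (crossv u v) = dotv u u * dotv v v - dotv u v ^+ 2.
Proof. rewrite !dotvE; have [-> -> ->] := crossvE u v; ring. Qed.
End V.
Section D.
Variable R : realType.
Implicit Types (u v : R -> 'rV[R]_3).
Notation c u k := (u ord0 (@inord 2 k)).

Lemma comp_is_derive u s k : derivable u s 1 ->
  is_derive s 1 (fun r => c (u r) k) (c ('D_1 u s) k).
Proof.
move=> du; have := (derivable_mxP u s 1).1 du ord0 (inord k) => dk.
by apply: DeriveDef => //; rewrite derive_mx // mxE.
Qed.

Lemma dotv_is_derive u v s : derivable u s 1 -> derivable v s 1 ->
  is_derive s 1 (fun r => dotv (u r) (v r))
     (dotv ('D_1 u s) (v s) + dotv (u s) ('D_1 v s)).
Proof.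
move=> du dv.
have E : (fun r => dotv (u r) (v r)) = (fun r => c (u r) 0 * c (v r) 0 + c (u r) 1 * c (v r) 1 + c (u r) 2 * c (v r) 2).
  by apply/funext => r; rewrite dotvE.
rewrite E !dotvE.
have u0 := comp_is_derive u s 0 du; have u1 := comp_is_derive u s 1 du; have u2 := comp_is_derive u s 2 du.
have v0 := comp_is_derive v s 0 dv; have v1 := comp_is_derive v s 1 dv; have v2 := comp_is_derive v s 2 dv.
have H := is_deriveD (is_deriveD (is_deriveM u0 v0) (is_deriveM u1 v1)) (is_deriveM u2 v2).
apply: is_derive_eq H _.
rewrite /GRing.scale /=; ring.
Qed.

End D.

Lemma idd (R : realType) (f : R -> R) (x df : R) : is_derive x 1 f df -> derivable f x 1.
Proof. by case. Qed.
Lemma idv (R : realType) (f : R -> R) (x df : R) : is_derive x 1 f df -> 'D_1 f x = df.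
Proof. by case. Qed.
Arguments idd {R f x df}.
Arguments idv {R f x df}.

Lemma key (R : realType) (I : set R)
  (alpha T N B : R -> 'rV[R]_3) (k t : R -> R)
  (TT NT BT : R -> 'rV[R]_3) (kT tT : R -> R)
  (X beta Nb Bb : R -> 'rV[R]_3) (kb tb : R -> R) :
  open I ->
  is_frenet I (fun _ => 1) alpha T N B k t ->
  is_frenet I k T TT NT BT kT tT ->
  is_frenet I k beta X Nb Bb kb tb ->
  (forall s, I s -> Nb s = TT s) ->
  forall s, I s ->
  [/\ [/\ 0 < k s, 0 < kT s & 0 < kb s],
      kT s * dotv (X s) (NT s) = - kb s /\ kT s * dotv (X s) (BT s) = tb s,
      kT s ^+ 2 = kb s ^+ 2 + tb s ^+ 2 &
      is_derive s 1 (fun r => dotv (X r) (NT r)) (k s * tT s * dotv (X s) (BT s))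
    /\ is_derive s 1 (fun r => dotv (X r) (BT r)) (- (k s * tT s * dotv (X s) (NT s)))].
Proof.
move=> oI hA hT hB hNb s Is.
have [_ _ _ _ k0] := hA s Is.
have [[dT eT] [dTT eTT] [dNT eNT] [[dBT eBT] [TT1 NT1 TN0 BTdef]] kT0] := hT s Is.
have [_ [dX eX] [dNb eNb] [_ [X1 Nb1 XNb0 Bbdef]] kb0] := hB s Is.
have nI : \forall r \near s, I r by move: oI; rewrite openE => /(_ s Is).
have XT0 : dotv (X s) (TT s) = 0 by rewrite -hNb.
have DN : derive1 Nb s = derive1 TT s.
  rewrite !derive1E; apply: near_eq_derive; apply: filterS nI => r; exact: hNb.
have V : kT s *: NT s = - kb s *: X s + tb s *: Bb s.
  apply: (@scalerI _ _ (k s)); first by rewrite gt_eqF.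
  by rewrite scalerA -eNb DN eTT.
have Bbx : Bb s = crossv (X s) (TT s) by rewrite Bbdef hNb.
have XBb : dotv (X s) (Bb s) = 0 by rewrite Bbx dotv_crossl.
have BbBb : dotv (Bb s) (Bb s) = 1.
  by rewrite Bbdef dotv_lagrange X1 Nb1 XNb0; ring.
have ha : kT s * dotv (X s) (NT s) = - kb s.
  by rewrite -dotvZr V dotvDr !dotvZr X1 XBb; ring.
have hb : kT s * dotv (X s) (BT s) = tb s.
  rewrite BTdef -dotv_triple -Bbx -dotvZl V dotvDl !dotvZl BbBb XBb; ring.
split => //; last split.
- have <- : dotv (kT s *: NT s) (kT s *: NT s) = kT s ^+ 2.
    by rewrite dotvZl dotvZr NT1; ring.
  rewrite V !dotvDl !dotvDr !dotvZl !dotvZr X1 XBb BbBb dotvC XBb; ring.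
- apply: is_derive_eq; first exact: dotv_is_derive.
  rewrite -!derive1E eX eNT hNb // dotvZl TN0 dotvZr dotvDr !dotvZr XT0; ring.
- apply: is_derive_eq; first exact: dotv_is_derive.
  rewrite -!derive1E eX eBT hNb // dotvZl BTdef dotv_crossl dotvZr; ring.
Qed.

Theorem theorem4p3 (R : realType) (I : set R)
  (alpha T N B : R -> 'rV[R]_3) (k t : R -> R)
  (TT NT BT : R -> 'rV[R]_3) (kT tT : R -> R)
  (x y z : R -> R) (X beta Nb Bb : R -> 'rV[R]_3) (kb tb : R -> R) :
  open I -> is_interval I ->
  is_frenet I (fun _ => 1) alpha T N B k t ->
  is_frenet I k T TT NT BT kT tT ->
  (forall s, I s -> x s ^+ 2 + y s ^+ 2 + z s ^+ 2 = 1) ->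
  (forall s, I s -> X s = x s *: TT s + y s *: NT s + z s *: BT s) ->
  is_frenet I k beta X Nb Bb kb tb ->
  (forall s, I s -> Nb s = TT s) ->
  exists phi : R -> R,
    (forall s, I s -> derivable phi s 1 /\ derive1 phi s = k s * tT s) /\
    (forall s, I s -> kb s = - kT s * sin (phi s) /\ tb s = kT s * cos (phi s)) /\
    (forall s, I s ->
       kT s = Num.sqrt (kb s ^+ 2 + tb s ^+ 2) /\
       derivable (fun u => tb u / kb u) s 1 /\
       tT s = kb s ^+ 2 / (kb s ^+ 2 + tb s ^+ 2) *
              (derive1 (fun u => tb u / kb u) s / k s)).
Proof.
move=> oI _ hA hT _ _ hB hNb.
pose a := fun r => dotv (X r) (NT r).
pose b := fun r => dotv (X r) (BT r).
have K := @key R I alpha T N B k t TT NT BT kT tT X beta Nb Bb kb tb oI hA hT hB hNb.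
rewrite -/a -/b in K.
have pre : forall s, I s -> [/\ a s < 0, a s ^+ 2 + b s ^+ 2 = 1 & -1 < b s < 1].
  move=> s Is; have [[k0 kT0 kb0] [ha hb] hk _] := K s Is.
  have {ha}ha : kT s * a s = - kb s := ha.
  have {hb}hb : kT s * b s = tb s := hb.
  have alt0 : a s < 0.
    by rewrite -(pmulr_rlt0 (a s) kT0) ha oppr_lt0.
  have ab1 : a s ^+ 2 + b s ^+ 2 = 1.
    apply: (@mulfI _ (kT s ^+ 2)); first by rewrite gt_eqF // exprn_gt0.
    by rewrite mulr1 {2}hk -[kb s ^+ 2]sqrrN -ha -hb; ring.
  split => //.
  apply/andP; split; nra.
have nI : forall s, I s -> \forall r \near s, I r.
  by move=> s Is; move: oI; rewrite openE => /(_ s Is).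
exists (fun r => - acos (b r)).
split; [|split].
- move=> s Is; have [[k0 kT0 kb0] _ _ [da db]] := K s Is.
  have [alt0 ab1 bI] := pre s Is.
  have dacos := is_derive1_acos bI.
  have dcomp : derivable (acos \o b) s 1.
    apply/derivable1_diffP; apply: differentiable_comp; apply/derivable1_diffP.
      exact: idd db.
    exact: idd dacos.
  have Dcomp : derive1 (acos \o b) s = derive1 acos (b s) * derive1 b s.
    by apply: derive1_comp; [exact: idd db | exact: idd dacos].
  have H : is_derive s 1 (acos \o b) (derive1 (acos \o b) s).
    by rewrite derive1E; exact: derivableP.
  have H2 : is_derive s 1 (fun r => - acos (b r)) (- derive1 (acos \o b) s) := is_deriveN H.
  case: H2 => H2d H2v; split; first exact: H2d.
  rewrite derive1E.
  rewrite H2v.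
  rewrite Dcomp !derive1E (idv dacos) (idv db).
  have -> : 1 - b s ^+ 2 = a s ^+ 2 by rewrite -ab1; ring.
  rewrite sqrtr_sqr ltr0_norm //.
  have an0 : a s != 0 by rewrite lt_eqF.
  by rewrite -/(a s); field.
- move=> s Is; have [[k0 kT0 kb0] [ha hb] hk _] := K s Is.
  have {ha}ha : kT s * a s = - kb s := ha.
  have {hb}hb : kT s * b s = tb s := hb.
  have [alt0 ab1 bI] := pre s Is.
  have bI' : -1 <= b s <= 1 by case/andP: bI => h1 h2; rewrite !ltW.
  rewrite sinN cosN sin_acos // acosK ?in_itv //.
  have -> : 1 - b s ^+ 2 = a s ^+ 2 by rewrite -ab1; ring.
  rewrite sqrtr_sqr ltr0_norm //; split.
    by rewrite opprK mulNr ha opprK.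
  by rewrite hb.
- move=> s Is; have [[k0 kT0 kb0] [ha hb] hk [da db]] := K s Is.
  have {ha}ha : kT s * a s = - kb s := ha.
  have {hb}hb : kT s * b s = tb s := hb.
  have [alt0 ab1 bI] := pre s Is.
  have an0 : a s != 0 by rewrite lt_eqF.
  split.
    by rewrite -hk sqrtr_sqr gtr0_norm.
  have dinv : is_derive s 1 (fun r => (a r)^-1) (- (a s) ^- 2 *: (k s * tT s * b s)).
    apply: DeriveDef; first exact: derivableV (idd da).
    by rewrite deriveV // ?(idd da) // (idv da).
  have dg := is_deriveN (is_deriveM db dinv).
  have ng : \forall r \near s, (- (b * (fun r => (a r)^-1))) r = tb r / kb r.
    apply: filterS (nI s Is) => r Ir.
    have [[_ kTr _] [har hbr] _ _] := K r Ir.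
    have {har}har : kT r * a r = - kb r := har.
    have {hbr}hbr : kT r * b r = tb r := hbr.
    have [alt0r _ _] := pre r Ir.
    have anr : a r != 0 by rewrite lt_eqF.
    have kTr0 : kT r != 0 by rewrite gt_eqF.
    change (- (b r * (a r)^-1) = tb r / kb r).
    rewrite -hbr -[kb r]opprK -har; field.
    by rewrite anr kTr0.
  have dq := near_eq_is_derive ng dg.
  split; first exact: (idd dq).
  rewrite derive1E (idv dq).
  rewrite -hk -[kb s ^+ 2]sqrrN -ha /GRing.scale /= -/(a s).
  have kn0 : k s != 0 by rewrite gt_eqF.
  have kTn0 : kT s != 0 by rewrite gt_eqF.
  rewrite -{1}[tT s]mulr1 -ab1.
  by field; rewrite kn0 an0 kTn0.
Qed.
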